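(* Let $(\mathcal{M},g,\nabla,\nabla^* )$ be a dually flat manifold with $\nabla$-affine coordinates $\theta$, $\nabla^*$-affine coordinates $\eta$ and potentials $\psi,\varphi$. Let $\mathcal{S}\subset\mathcal{M}$ be an $m$-dimensional $\nabla$-auto-parallel submanifold, endowed with the induced dually flat structure, and let $(u_a)_{1\le a\le m}$ be $\nabla$-affine coordinates on $\mathcal{S}$. Fix $q\in\mathcal{M}\setminus\mathcal{S}$ and consider the $\nabla^*$-projection problem $\min_{p\in\mathcal{S}} D(p\|q)$, i.e. minimization of $f(u)=\psi(\theta(u))+\varphi(\eta^q)-\sum_{i=1}^n\theta_i(u)\eta^q_i$. Then, in the coordinates $u$, each iteration of the coordinate-based dual Riemannian Newton method applied to $f$ on $\mathcal{S}$ coincides with the iteration of the coordinate-based natural gradient method (with step size $s=1$); that is, both methods produce the update $u\gets u-\mathbf{G}(u)^{-1}\boldsymbol{\nabla}f(u)$.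
   Context: Dually flat manifold: a Riemannian manifold $(\mathcal{M},g)$ with torsion-free affine connections $\nabla,\nabla^*$ that are dual w.r.t. $g$ ($X\langle Y,Z\rangle=\langle\nabla_XY,Z\rangle+\langle Y,\nabla^*_XZ\rangle$) and whose curvature tensors both vanish. Coordinates are $\nabla$-affine if the Christoffel symbols of $\nabla$ vanish in them. On such a manifold there exist $\nabla$-affine coordinates $\theta$, $\nabla^*$-affine coordinates $\eta$ and smooth strictly convex potentials $\psi(\theta)$, $\varphi(\eta)$ with $\eta_i=\partial\psi/\partial\theta_i$, $\theta_i=\partial\varphi/\partial\eta_i$, $g_{ij}(\theta)=\partial^2\psi/\partial\theta_i\partial\theta_j$, $\psi(\theta)+\varphi(\eta)=\sum_i\theta_i\eta_i$. The $\nabla$-divergence is $D(p\|q)=\psi(\theta^p)+\varphi(\eta^q)-\sum_i\theta^p_i\eta^q_i$. A submanifold $\mathcal{S}$ is $\nabla$-auto-parallel if $\nabla_XY$ is tangent to $\mathcal{S}$ for all vector fields $X,Y$ tangent to $\mathcal{S}$; equivalently there are a constant rank-$m$ matrix $\mathbf{A}\in\mathbb{R}^{n\times m}$, a constant $\mathbf{b}\in\mathbb{R}^n$ and $\nabla$-affine coordinates $u$ on $\mathcal{S}$ with $\theta=\mathbf{A}u+\mathbf{b}$; with the induced metric, the restricted connection $\nabla$ and its dual, $\mathcal{S}$ is itself dually flat. For a manifold with dual connections $(\nabla,\nabla^* )$, a chart $\xi$, metric matrix $\mathbf{G}(\xi)$, coordinate gradient $\boldsymbol{\nabla}f(\xi)$,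 $a=\mathbf{G}^{-1}\boldsymbol{\nabla}f$, Christoffel symbols $\Gamma^k_{ij}$ of $\nabla$ and $\Gamma^{*}_{ij}{}^k$ of $\nabla^*$ (defined by $\nabla_{\partial_i}\partial_j=\sum_k\Gamma^k_{ij}\partial_k$, etc.), and $\mathbf{H}^*_{ij}=\partial a_j/\partial\xi_i+\sum_k a_k\Gamma^{*}_{ik}{}^j$: the coordinate-based dual Riemannian Newton method iterates: solve $\mathbf{H}^{*\top}(\xi)\boldsymbol{\beta}=-\mathbf{G}^{-1}(\xi)\boldsymbol{\nabla}f(\xi)$, then set $\xi_i\gets\xi_i+\beta_i-\tfrac12\sum_{j,k}\Gamma^i_{jk}(\xi)\beta_j\beta_k$. The coordinate-based natural gradient method with step size $s>0$ iterates $\xi\gets\xi-s\,\mathbf{G}^{-1}(\xi)\boldsymbol{\nabla}f(\xi)$. *)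

(* Defs.v *)
From HB Require Import structures.
From mathcomp Require Import all_boot all_order all_algebra.
From mathcomp Require Import all_classical all_reals all_analysis.
Set Implicit Arguments. Unset Strict Implicit. Unset Printing Implicit Defensive.
Import Order.TTheory GRing.Theory Num.Theory.
Import numFieldNormedType.Exports.
Local Open Scope classical_set_scope.
Local Open Scope ring_scope.

(* Coordinate points are row vectors 'rV[R]_k; e_i := delta_mx 0 i. *)

Definition partial {R : realType} {k : nat} (f : 'rV[R]_k -> R) (i : 'I_k)
  (x : 'rV[R]_k) : R := derive f x (delta_mx 0 i).

Fixpoint iter_partial {R : realType} {k : nat} (f : 'rV[R]_k -> R)
  (s : seq 'I_k) : 'rV[R]_k -> R :=
  match s with
  | [::] => f
  | i :: s' => partial (iter_partial f s') i
  end.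

Definition smooth_at {R : realType} {k : nat} (f : 'rV[R]_k -> R)
  (x : 'rV[R]_k) : Prop :=
  forall s : seq 'I_k, differentiable (iter_partial f s) x.

Definition grad {R : realType} {k : nat} (f : 'rV[R]_k -> R) (x : 'rV[R]_k)
  : 'cV[R]_k := \col_i partial f i x.

Definition hess {R : realType} {k : nat} (f : 'rV[R]_k -> R) (x : 'rV[R]_k)
  : 'M[R]_k := \matrix_(i, j) partial (partial f j) i x.

(* Gam xi i j k = Gamma^k_{ij} (Christoffel symbols of nabla).
   The Christoffel symbols of the dual connection nabla^* are determined by duality
   d_i <d_l, d_k> = <nabla_{d_i} d_l, d_k> + <d_l, nabla^*_{d_i} d_k>, i.e.
   Gamma^*_{ik}^j = sum_l G^{jl} (d_i G_{lk} - sum_p Gamma^p_{il} G_{pk}). *)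
Definition dual_christoffel {R : realType} {k : nat}
  (G : 'rV[R]_k -> 'M[R]_k) (Gam : 'rV[R]_k -> 'I_k -> 'I_k -> 'I_k -> R)
  (xi : 'rV[R]_k) (i kk j : 'I_k) : R :=
  \sum_l (invmx (G xi)) j l *
     (partial (fun y => G y l kk) i xi - \sum_p Gam xi i l p * G xi p kk).

Definition nat_dir {R : realType} {k : nat} (G : 'rV[R]_k -> 'M[R]_k)
  (f : 'rV[R]_k -> R) (xi : 'rV[R]_k) : 'cV[R]_k := invmx (G xi) *m grad f xi.

Definition Hstar {R : realType} {k : nat} (G : 'rV[R]_k -> 'M[R]_k)
  (Gam : 'rV[R]_k -> 'I_k -> 'I_k -> 'I_k -> R) (f : 'rV[R]_k -> R)
  (xi : 'rV[R]_k) : 'M[R]_k :=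
  \matrix_(i, j) (partial (fun y => nat_dir G f y j 0) i xi
                  + \sum_kk nat_dir G f xi kk 0 * dual_christoffel G Gam xi i kk j).

Definition dual_newton_system {R : realType} {k : nat} (G : 'rV[R]_k -> 'M[R]_k)
  (Gam : 'rV[R]_k -> 'I_k -> 'I_k -> 'I_k -> R) (f : 'rV[R]_k -> R)
  (xi : 'rV[R]_k) (beta : 'cV[R]_k) : Prop :=
  (Hstar G Gam f xi)^T *m beta = - nat_dir G f xi.

Definition dual_newton_update {R : realType} {k : nat}
  (Gam : 'rV[R]_k -> 'I_k -> 'I_k -> 'I_k -> R) (xi : 'rV[R]_k) (beta : 'cV[R]_k)
  : 'rV[R]_k :=
  \row_i (xi 0 i + beta i 0 - 2^-1 * \sum_j \sum_kk Gam xi j kk i * beta j 0 * beta kk 0).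

Definition nat_grad_step {R : realType} {k : nat} (G : 'rV[R]_k -> 'M[R]_k)
  (f : 'rV[R]_k -> R) (s : R) (xi : 'rV[R]_k) : 'rV[R]_k :=
  xi - s *: (nat_dir G f xi)^T.

Definition eta_of {R : realType} {n : nat} (psi : 'rV[R]_n -> R) (th : 'rV[R]_n)
  : 'rV[R]_n := \row_i partial psi i th.

(* nabla-auto-parallel submanifold theta = u A + b (row convention) *)
Definition theta_of {R : realType} {n m : nat} (A : 'M[R]_(m, n)) (b : 'rV[R]_n)
  (u : 'rV[R]_m) : 'rV[R]_n := u *m A + b.

Definition induced_metric {R : realType} {n m : nat} (psi : 'rV[R]_n -> R)
  (A : 'M[R]_(m, n)) (b : 'rV[R]_n) (u : 'rV[R]_m) : 'M[R]_m :=
  A *m hess psi (theta_of A b u) *m A^T.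

(* u are nabla-affine on S: the Christoffel symbols of nabla vanish *)
Definition zero_christoffel {R : realType} {m : nat} :
  'rV[R]_m -> 'I_m -> 'I_m -> 'I_m -> R := fun _ _ _ _ => 0.

Definition proj_objective {R : realType} {n m : nat} (psi phi : 'rV[R]_n -> R)
  (A : 'M[R]_(m, n)) (b : 'rV[R]_n) (thq : 'rV[R]_n) (u : 'rV[R]_m) : R :=
  psi (theta_of A b u) + phi (eta_of psi thq)
  - \sum_i theta_of A b u 0 i * eta_of psi thq 0 i.

(* Main.v *)
Require Import Defs.
From HB Require Import structures.
From mathcomp Require Import all_boot all_order all_algebra.
From mathcomp Require Import all_classical all_reals all_analysis.
From mathcomp Require Import perm lra.
Import Order.TTheory GRing.Theory Num.Theory.
Import numFieldNormedType.Exports.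
Local Open Scope classical_set_scope.
Local Open Scope ring_scope.

Section P1.
Context {R : realType} {V : normedModType R}.

Lemma diff_bigsum (I : Type) (r : seq I) (P : pred I) (F : I -> V -> R) (x : V) :
  (forall i, P i -> differentiable (F i) x) ->
  differentiable (fun y => \sum_(i <- r | P i) F i y) x.
Proof.
move=> HF; elim: r => [|i r IH].
  have -> : (fun y => \sum_(i <- [::] | P i) F i y) = cst 0.
    by apply/funext => y; rewrite big_nil.
  exact: differentiable_cst.
have -> : (fun y => \sum_(j <- i :: r | P j) F j y) =
   (fun y => (if P i then F i y else 0) + \sum_(j <- r | P j) F j y).
  by apply/funext => y; rewrite big_cons; case: (P i); rewrite ?add0r.
apply: differentiableD => //.
case Pi: (P i); first exact: HF.
exact: differentiable_cst.
Qed.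

Lemma diff_bigprod (I : Type) (r : seq I) (F : I -> V -> R) (x : V) :
  (forall i, differentiable (F i) x) ->
  differentiable (fun y => \prod_(i <- r) F i y) x.
Proof.
move=> HF; elim: r => [|i r IH].
  have -> : (fun y => \prod_(i <- [::]) F i y) = cst 1.
    by apply/funext => y; rewrite big_nil.
  exact: differentiable_cst.
have -> : (fun y => \prod_(j <- i :: r) F j y) =
   (F i * (fun y => \prod_(j <- r) F j y)).
  by apply/funext => y; rewrite big_cons.
exact: differentiableM.
Qed.

Lemma diff_det n (M : V -> 'M[R]_n) (x : V) :
  (forall i j, differentiable (fun y => M y i j) x) ->
  differentiable (fun y => \det (M y)) x.
Proof.
move=> HM; rewrite /determinant.
apply: diff_bigsum => s _.
have -> : (fun y => (-1) ^+ perm.odd_perm s * \prod_i M y i (s i)) =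
  (cst ((-1) ^+ perm.odd_perm s) * (fun y => \prod_i M y i (s i))).
  by apply/funext.
apply: differentiableM; first exact: differentiable_cst.
by apply: diff_bigprod => i; exact: HM.
Qed.

Lemma diff_adj n (M : V -> 'M[R]_n) (x : V) :
  (forall i j, differentiable (fun y => M y i j) x) ->
  forall i j, differentiable (fun y => \adj (M y) i j) x.
Proof.
move=> HM i j.
have -> : (fun y => \adj (M y) i j) =
  (cst ((-1) ^+ (j + i)) * (fun y => \det (row' j (col' i (M y))))).
  by apply/funext => y; rewrite mxE /cofactor.
apply: differentiableM; first exact: differentiable_cst.
apply: diff_det => k l.
have -> : (fun y => row' j (col' i (M y)) k l) = (fun y => M y (lift j k) (lift i l)).
  by apply/funext => y; rewrite !mxE.
exact: HM.
Qed.


Lemma der_bigsum {I : Type} (r : seq I) (F : I -> V -> R) (x v : V) :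
  (forall i, derivable (F i) x v) ->
  derivable (fun y => \sum_(i <- r) F i y) x v /\
  'D_v (fun y => \sum_(i <- r) F i y) x = \sum_(i <- r) 'D_v (F i) x.
Proof.
move=> HF; elim: r => [|i r [IH1 IH2]].
  have -> : (fun y => \sum_(i <- [::]) F i y) = cst 0.
    by apply/funext => y; rewrite big_nil.
  by rewrite big_nil derive_cst; split => //; exact: derivable_cst.
have -> : (fun y => \sum_(j <- i :: r) F j y) =
   (F i + (fun y => \sum_(j <- r) F j y)).
  by apply/funext => y; rewrite big_cons.
split; first exact: derivableD.
by rewrite deriveD // big_cons IH2.
Qed.

Lemma dinv n (M : V -> 'M[R]_n) (x v : V) :
  (forall i j, differentiable (fun y => M y i j) x) -> M x \in unitmx ->
  (forall j k, derivable (fun y => invmx (M y) j k) x v) /\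
  (\matrix_(j, k) 'D_v (fun y => invmx (M y) j k) x) *m M x
     = - (invmx (M x) *m \matrix_(j, k) 'D_v (fun y => M y j k) x).
Proof.
move=> HM Mu.
pose D := fun y => \det (M y).
have dD : differentiable D x by exact: diff_det.
have Dx0 : D x != 0 by rewrite /D -unitfE -unitmxE.
have nD : \forall y \near x, D y != 0.
  by apply: (cvgr_neq0 (D x)) => //; exact: differentiable_continuous.
pose N := fun j k y => (D y)^-1 * \adj (M y) j k.
have dN : forall j k, differentiable (N j k) x.
  move=> j k; apply: differentiableM; first exact: differentiableV.
  exact: diff_adj.
have eN : forall j k, \forall y \near x, N j k y = invmx (M y) j k.
  move=> j k; apply: filterS nD => y Dy.
  by rewrite /invmx unitmxE unitfE Dy mxE.
have dervN : forall j k, derivable (N j k) x v by move=> j k; exact: diff_derivable.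
have dervM : forall j k, derivable (fun y => M y j k) x v by move=> j k; exact: diff_derivable.
have dI : forall j k, derivable (fun y => invmx (M y) j k) x v.
  by move=> j k; exact: (near_eq_derivable (eN j k)).
have DI : forall j k, 'D_v (fun y => invmx (M y) j k) x = 'D_v (N j k) x.
  by move=> j k; apply: near_eq_derive; apply: filterS (eN j k) => y ->.
split => //.
apply/matrixP => j k; rewrite !mxE.
have eS : \forall y \near x, \sum_l N j l y * M y l k = cst (j == k)%:R y.
  apply: filterS nD => y Dy.
  have : (invmx (M y) *m M y) j k = (1%:M : 'M[R]_n) j k.
    by rewrite mulVmx // unitmxE unitfE.
  rewrite !mxE => <-; apply: eq_bigr => l _.
  by rewrite /N /invmx unitmxE unitfE Dy !mxE.
have := near_eq_derive v eS; rewrite derive_cst.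
have [_ ->] := der_bigsum (index_enum 'I_n) (fun l y => N j l y * M y l k) x v
   (fun l => derivableM (dervN j l) (dervM l k)).
move=> H0. rewrite /= in H0.
apply/eqP; rewrite -subr_eq0 opprK -big_split /= -[X in _ == X]H0; apply/eqP; apply: eq_bigr => l _.
rewrite deriveM // !mxE DI /N.
have -> : ((D x)^-1 * \adj (M x) j l) = invmx (M x) j l.
  by rewrite /invmx Mu [RHS]mxE.
by rewrite addrC; congr (_ + _); last exact: mulrC.
Qed.

End P1.
Lemma key_ineq (R : realType) (x y w : R) : 0 < `|x - y| -> `|x - w| < `|x - y| / 4 ->
    `|y - w| < `|x - y| / 4 -> False.
Proof. move=> H0 H1 H2; have := ler_distD w x y; rewrite (distrC w y); lra. Qed.

Section P2.
Context {R : realType} {V : normedModType R}.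

Lemma line_fun (g : V -> R) (z w : V) (s : R) :
  (fun h : R => h^-1 *: (((fun t : R => g (t *: w + z)) \o shift s) (h *: 1)
                 - (fun t : R => g (t *: w + z)) s)) =
  (fun h : R => h^-1 *: ((g \o shift (s *: w + z)) (h *: w) - g (s *: w + z))).
Proof.
apply/funext => h /=; congr (_ *: (g _ - _)).
by rewrite scalerDl addrA /GRing.scale /= mulr1.
Qed.

Lemma line_derivable (g : V -> R) (z w : V) (s : R) :
  derivable (fun t : R => g (t *: w + z)) s 1 = derivable g (s *: w + z) w.
Proof. by rewrite /derivable line_fun. Qed.

Lemma line_derive (g : V -> R) (z w : V) (s : R) :
  'D_1 (fun t : R => g (t *: w + z)) s = 'D_w g (s *: w + z).
Proof. by rewrite /derive line_fun. Qed.

Lemma mvt_line (g : V -> R) (z w : V) (t : R) : 0 < t ->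
  (forall s, 0 <= s <= t -> differentiable g (s *: w + z)) ->
  exists2 c, 0 < c < t & g (t *: w + z) - g z = t * 'D_w g (c *: w + z).
Proof.
move=> t0 Hd.
pose f := fun s : R => g (s *: w + z).
have df : forall s, 0 <= s <= t -> derivable f s 1.
  move=> s Hs; rewrite /f line_derivable; exact/diff_derivable/Hd.
have [c Hc E] : exists2 c, c \in `]0, t[%R & f t - f 0 = 'D_w g (c *: w + z) * (t - 0).
  apply: MVT => //.
    move=> s; rewrite in_itv /= => /andP[s0 st].
    apply: DeriveDef; last exact: line_derive.
    by apply: df; rewrite !ltW.
  apply: continuous_in_subspaceT => s; rewrite inE /= in_itv /= => Hs.
  apply: differentiable_continuous; apply/derivable1_diffP; exact: df.
exists c; first by move: Hc; rewrite in_itv.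
by move: E; rewrite /f scale0r add0r subr0 mulrC.
Qed.

Lemma trans_fun (g : V -> R) (c y w : V) :
  (fun h : R => h^-1 *: (((fun x => g (x + c)) \o shift y) (h *: w) - g (y + c))) =
  (fun h : R => h^-1 *: ((g \o shift (y + c)) (h *: w) - g (y + c))).
Proof. by apply/funext => h /=; rewrite addrA. Qed.

Lemma trans_derivable (g : V -> R) (c y w : V) :
  derivable (fun x => g (x + c)) y w = derivable g (y + c) w.
Proof. by rewrite /derivable trans_fun. Qed.

Lemma trans_derive (g : V -> R) (c y w : V) :
  'D_w (fun x => g (x + c)) y = 'D_w g (y + c).
Proof. by rewrite /derive trans_fun. Qed.

Lemma half (g : V -> R) (z a b : V) (t : R) : 0 < t ->
  (forall s r, 0 <= s <= t -> 0 <= r <= t ->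
     differentiable g (s *: a + r *: b + z) /\
     differentiable ('D_a g) (s *: a + r *: b + z)) ->
  exists s r, [/\ 0 < s < t, 0 < r < t &
    g (t *: a + t *: b + z) - g (t *: a + z) - g (t *: b + z) + g z
      = t * t * 'D_b ('D_a g) (s *: a + r *: b + z)].
Proof.
move=> t0 Hd.
have tt : 0 <= t <= t by apply/andP; split => //; exact: ltW.
have t00 : (0:R) <= 0 <= t by apply/andP; split => //; exact: ltW.
have dgT : forall s, 0 <= s <= t -> differentiable (fun y => g (y + t *: b)) (s *: a + z).
  move=> s Hs; apply: differentiable_comp.
    by apply: differentiableD => //; exact: differentiable_cst.
  by rewrite addrAC; case: (Hd s t Hs tt).
have dg0 : forall s, 0 <= s <= t -> differentiable g (s *: a + z).
  by move=> s Hs; have := (Hd s 0 Hs t00).1; rewrite scale0r addr0.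
pose al := (fun y => g (y + t *: b)) - g.
have [c Hc E1] := mvt_line al z a t t0 (fun s Hs => differentiableB (dgT s Hs) (dg0 s Hs)).
have Hc' : 0 <= c <= t by case/andP: Hc => *; rewrite !ltW.
have [r Hr E2] := mvt_line ('D_a g) (c *: a + z) b t t0
  (fun r Hr => ltac:(rewrite addrCA addrA; exact: (Hd c r Hc' Hr).2)).
exists c, r; split; [exact: Hc | exact: Hr |].
move: E1; rewrite /al /= deriveB; first last.
- exact/diff_derivable/dg0.
- exact/diff_derivable/dgT.
rewrite trans_derive => E1.
have P1 : r *: b + (c *: a + z) = c *: a + r *: b + z by rewrite addrCA addrA.
rewrite P1 [t *: b + _]addrC in E2.
rewrite -mulrA -E2 -E1 !fctE [t *: a + z + t *: b]addrAC [z + t *: b]addrC.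
by rewrite opprB addrA addrAC.
Qed.

Lemma schwarz_gen (g : V -> R) (Th : set V) (z a b : V) : open Th -> Th z ->
  (forall y, Th y -> [/\ differentiable g y, differentiable ('D_a g) y &
                        differentiable ('D_b g) y]) ->
  differentiable ('D_b ('D_a g)) z -> differentiable ('D_a ('D_b g)) z ->
  'D_b ('D_a g) z = 'D_a ('D_b g) z.
Proof.
move=> oTh Thz Hd d1 d2.
set c1 := 'D_b ('D_a g) z; set c2 := 'D_a ('D_b g) z.
apply/eqP; apply/negPn/negP => /eqP Hne.
have c12 : 0 < `|c1 - c2| by rewrite normr_gt0 subr_eq0; apply/eqP.
pose e := `|c1 - c2| / 4.
have e0 : 0 < e by rewrite /e divr_gt0.
have N1 : nbhs z Th by apply: open_nbhs_nbhs; split.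
have N2 : \forall t \near z, `|c1 - 'D_b ('D_a g) t| < e :=
  @cvgr_dist_lt _ _ _ _ (nbhs_filter z) _ _ (differentiable_continuous d1) _ e0.
have N3 : \forall t \near z, `|c2 - 'D_a ('D_b g) t| < e :=
  @cvgr_dist_lt _ _ _ _ (nbhs_filter z) _ _ (differentiable_continuous d2) _ e0.
have N := @filterI _ _ (nbhs_filter z) _ _ N1 (@filterI _ _ (nbhs_filter z) _ _ N2 N3).
have [d d0 Hball] := (nbhs_ballP _ _).1 N.
pose t := d / (2 * (`|a| + `|b| + 1)).
have hpos : 0 < 2 * (`|a| + `|b| + 1).
  by have := normr_ge0 a; have := normr_ge0 b; lra.
have t0 : 0 < t by rewrite /t divr_gt0.
have inB : forall s r, 0 <= s <= t -> 0 <= r <= t ->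
    [/\ Th (s *: a + r *: b + z), `|c1 - 'D_b ('D_a g) (s *: a + r *: b + z)| < e &
        `|c2 - 'D_a ('D_b g) (s *: a + r *: b + z)| < e].
  move=> s r /andP[s0 st] /andP[r0 rt].
  suff /Hball [T [B1 B2]] : ball z d (s *: a + r *: b + z) by split.
  rewrite -ball_normE /= (_ : z - _ = - (s *: a + r *: b)); last first.
    by rewrite opprD addrCA subrr addr0.
  rewrite normrN.
  have ha := normr_ge0 a; have hb := normr_ge0 b.
  have H1 : `|s *: a + r *: b| <= s * `|a| + r * `|b|.
    apply: (le_trans (ler_normD _ _)); rewrite !normrZ (ger0_norm s0) (ger0_norm r0).
    exact: lexx.
  have H2 : s * `|a| + r * `|b| <= t * (`|a| + `|b|).
    rewrite mulrDr; apply: lerD; apply: ler_wpM2r => //.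
  have H3 : t * (`|a| + `|b|) < d.
    have hX : `|a| + `|b| < 2 * (`|a| + `|b| + 1) by lra.
    by rewrite /t mulrAC (ltr_pdivrMr _ _ hpos) (ltr_pM2l d0).
  lra.
have [s1 [r1 [Hs1 Hr1 E1]]] := half g z a b t t0
  (fun s r Hs Hr => ltac:(have [T _ _] := inB s r Hs Hr; have [? ? _] := Hd _ T; by split)).
have [s2 [r2 [Hs2 Hr2 E2]]] := half g z b a t t0
  (fun s r Hs Hr => ltac:(have [T _ _] := inB r s Hr Hs;
     rewrite [r *: a + s *: b]addrC in T; have [? _ ?] := Hd _ T; by split)).
have ltW2 : forall x, 0 < x < t -> 0 <= x <= t.
  by move=> x /andP[? ?]; apply/andP; split; apply: ltW.
have [_ B1 _] := inB s1 r1 (ltW2 _ Hs1) (ltW2 _ Hr1).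
have [_ _ B2] := inB r2 s2 (ltW2 _ Hr2) (ltW2 _ Hs2).
rewrite [r2 *: a + s2 *: b]addrC in B2.
have EE : 'D_b ('D_a g) (s1 *: a + r1 *: b + z) = 'D_a ('D_b g) (s2 *: b + r2 *: a + z).
  have tt0 : t * t != 0 by exact: (mulf_neq0 (lt0r_neq0 t0) (lt0r_neq0 t0)).
  apply: (mulfI tt0); rewrite -E1 -E2 [t *: b + t *: a]addrC; congr (_ + _); exact: addrAC.
rewrite EE in B1.
move: B1 B2; rewrite /e => B1 B2.
exact: (key_ineq _ _ _ _ c12 B1 B2).
Qed.
End P2.
Section P3.
Context {R : realType}.

Lemma diff_bigsumW {V W : normedModType R} (I : Type) (r : seq I) (F : I -> V -> W) (x : V) :
  (forall i, differentiable (F i) x) ->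
  differentiable (fun y => \sum_(i <- r) F i y) x.
Proof.
move=> HF; elim: r => [|i r IH].
  have -> : (fun y => \sum_(i <- [::]) F i y) = cst 0.
    by apply/funext => y; rewrite big_nil.
  exact: differentiable_cst.
have -> : (fun y => \sum_(j <- i :: r) F j y) =
   (F i + (fun y => \sum_(j <- r) F j y)).
  by apply/funext => y; rewrite big_cons.
exact: differentiableD.
Qed.

Lemma dtheta {n m : nat} (A : 'M[R]_(m, n)) (b : 'rV[R]_n) (u : 'rV[R]_m) :
  differentiable (theta_of A b) u.
Proof.
have -> : theta_of A b = (fun y => \sum_k (fun y : 'rV[R]_m => y 0 k *: row k A) y + b).
  by apply/funext => y; rewrite /theta_of mulmx_sum_row.
apply: differentiableD; last exact: differentiable_cst.
apply: diff_bigsumW => k.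
apply: differentiableZl; exact: differentiable_coord.
Qed.

Lemma comp_fun {n m : nat} (A : 'M[R]_(m, n)) (b : 'rV[R]_n) (g : 'rV[R]_n -> R) y v :
  (fun h : R => h^-1 *: (((fun x => g (theta_of A b x)) \o shift y) (h *: v)
                 - g (theta_of A b y))) =
  (fun h : R => h^-1 *: ((g \o shift (theta_of A b y)) (h *: (v *m A)) - g (theta_of A b y))).
Proof.
apply/funext => h /=; congr (_ *: (g _ - _)).
by rewrite /theta_of mulmxDl scalemxAl addrA.
Qed.

Lemma comp_derivable {n m : nat} (A : 'M[R]_(m, n)) (b : 'rV[R]_n) (g : 'rV[R]_n -> R) y v :
  derivable (fun x => g (theta_of A b x)) y v = derivable g (theta_of A b y) (v *m A).
Proof. by rewrite /derivable comp_fun. Qed.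

Lemma comp_derive {n m : nat} (A : 'M[R]_(m, n)) (b : 'rV[R]_n) (g : 'rV[R]_n -> R) y v :
  'D_v (fun x => g (theta_of A b x)) y = 'D_(v *m A) g (theta_of A b y).
Proof. by rewrite /derive comp_fun. Qed.

Lemma L1 {n : nat} (g : 'rV[R]_n -> R) (z w : 'rV[R]_n) : differentiable g z ->
  'D_w g z = \sum_p w 0 p * partial g p z.
Proof.
move=> dg; rewrite deriveE // {1}(row_sum_delta w) linear_sum.
apply: eq_bigr => p _; rewrite linearZ /= /partial deriveE //.
Qed.

Lemma coord_derive {p q : nat} (x v : 'M[R]_(p, q)) i j :
  derivable (fun t : 'M[R]_(p, q) => t i j) x v /\ 'D_v (fun t : 'M[R]_(p, q) => t i j) x = v i j.
Proof.
have di : derivable (@id 'M[R]_(p, q)) x v by exact: derivable_id.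
split; first exact: ((derivable_mxP _ _ _).1 di i j).
have := derive_mx di; rewrite derive_id => /matrixP /(_ i j).
by rewrite mxE.
Qed.

End P3.

Theorem theorem2 (R : realType) (n m : nat)
  (Theta : set 'rV[R]_n) (psi phi : 'rV[R]_n -> R)
  (A : 'M[R]_(m, n)) (b : 'rV[R]_n) (thq : 'rV[R]_n) (u : 'rV[R]_m) :
  open Theta ->
  (forall th, Theta th -> smooth_at psi th) ->
  (forall th, Theta th -> forall v : 'rV[R]_n, v != 0 ->
       0 < (v *m hess psi th *m v^T) 0 0) ->
  (forall th, Theta th ->
       psi th + phi (eta_of psi th) = \sum_i th 0 i * eta_of psi th 0 i) ->
  \rank A = m ->
  Theta thq ->
  (forall v : 'rV[R]_m, theta_of A b v != thq) ->
  Theta (theta_of A b u) ->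
  forall beta : 'cV[R]_m,
    dual_newton_system (induced_metric psi A b) zero_christoffel
      (proj_objective psi phi A b thq) u beta ->
    dual_newton_update zero_christoffel u beta
    = nat_grad_step (induced_metric psi A b) (proj_objective psi phi A b thq) 1 u.
Proof.
move=> oTh smooth posdef _ rkA _ _ Thu beta.
set th := theta_of A b.
set G := induced_metric psi A b.
set f := proj_objective psi phi A b thq.
set eq := eta_of psi thq.
have sm0 : forall z, Theta z -> differentiable psi z by move=> z /smooth /(_ [::]).
have sm1 : forall z p, Theta z -> differentiable (partial psi p) z
  by move=> z p /smooth /(_ [:: p]).
have sm2 : forall z p q, Theta z -> differentiable (partial (partial psi p) q) z
  by move=> z p q /smooth /(_ [:: q; p]).
have Thn : \forall y \near u, Theta (th y).
  have cth := differentiable_continuous (dtheta A b u).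
  exact: (cth Theta (open_nbhs_nbhs (conj oTh Thu))).
have Hsym : forall p q, hess psi (th u) p q = hess psi (th u) q p.
  move=> p q; rewrite !mxE.
  apply: (@schwarz_gen R _ psi Theta) => //.
  - by move=> y Thy; split; [exact: sm0 | exact: sm1 | exact: sm1].
  - exact: sm2.
  - exact: sm2.
have Gu : G u \in unitmx.
  rewrite -row_free_unit; apply: inj_row_free => v vG0.
  apply/eqP; apply/negPn/negP => v0.
  have rfA : row_free A by rewrite /row_free rkA.
  have w0 : v *m A != 0 by rewrite mulmx_free_eq0.
  have := posdef _ Thu _ w0.
  have -> : (v *m A *m hess psi (theta_of A b u) *m (v *m A)^T) = v *m G u *m v^T.
    by rewrite /G /induced_metric trmx_mul !mulmxA.
  by rewrite vG0 mul0mx mxE ltxx.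
have dG : forall l k, differentiable (fun y => G y l k) u.
  move=> l k.
  have -> : (fun y => G y l k) = (fun y => \sum_j \sum_p
      (fun y => (A l p * A k j) * hess psi (th y) p j) y).
    apply/funext => y; rewrite /G /induced_metric mxE.
    apply: eq_bigr => j _; rewrite !mxE mulr_suml; apply: eq_bigr => p _.
    by rewrite !mxE mulrAC.
  apply: diff_bigsum => j _; apply: diff_bigsum => p _.
  have -> : (fun y => (A l p * A k j) * hess psi (th y) p j) =
     (cst (A l p * A k j) * (partial (partial psi j) p \o th)).
    by apply/funext => y; rewrite /= mxE.
  apply: differentiableM; first exact: differentiable_cst.
  apply: differentiable_comp; first exact: dtheta.
  exact: sm2.
pose F := fun z : 'rV[R]_n => psi z + phi eq - \sum_i z 0 i * eq 0 i.
have fF : f = fun y => F (th y) by [].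
have dL : forall z, differentiable (fun z : 'rV[R]_n => \sum_i z 0 i * eq 0 i) z.
  move=> z; apply: diff_bigsum => i _.
  have -> : (fun z : 'rV[R]_n => z 0 i * eq 0 i) = (fun z : 'rV[R]_n => z 0 i) * cst (eq 0 i)
    by apply/funext.
  apply: differentiableM; [exact: differentiable_coord | exact: differentiable_cst].
have dF : forall z, Theta z -> differentiable F z.
  move=> z Tz; apply: differentiableB; last exact: dL.
  apply: differentiableD; [exact: sm0 | exact: differentiable_cst].
have pF : forall z p, Theta z -> partial F p z = partial psi p z - eq 0 p.
  move=> z p Tz; rewrite /partial.
  have -> : F = (psi + cst (phi eq)) - (fun z : 'rV[R]_n => \sum_i z 0 i * eq 0 i).
    by apply/funext.
  rewrite deriveB; first last.
  - exact/diff_derivable/dL.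
  - by apply/diff_derivable/differentiableD; [exact: sm0 | exact: differentiable_cst].
  rewrite deriveD; first last.
  - exact: derivable_cst.
  - exact/diff_derivable/sm0.
  rewrite derive_cst addr0; congr (_ - _).
  have [_ ->] := der_bigsum (index_enum 'I_n) (fun i (z : 'rV[R]_n) => z 0 i * eq 0 i) z
     (delta_mx 0 p) (fun i => derivableM (coord_derive z (delta_mx 0 p) 0 i).1 (derivable_cst _ _ _)).
  rewrite (bigD1 p) //= big1 ?addr0.
    rewrite deriveM; last exact: derivable_cst.
      have e_pp : (delta_mx 0 p : 'rV[R]_n) 0 p = 1 by rewrite mxE !eqxx.
      rewrite derive_cst (coord_derive z (delta_mx 0 p) 0 p).2 scaler0 add0r e_pp.
      by rewrite /GRing.scale /= mulr1.
    exact: (coord_derive z (delta_mx 0 p) 0 p).1.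
  move=> i ip; rewrite deriveM; last exact: derivable_cst.
    have e_pi : (delta_mx 0 p : 'rV[R]_n) 0 i = 0 by rewrite mxE (negbTE ip) andbF.
    rewrite derive_cst (coord_derive z (delta_mx 0 p) 0 i).2 e_pi.
    by rewrite scaler0 add0r /GRing.scale /= mulr0.
  exact: (coord_derive z (delta_mx 0 p) 0 i).1.
pose P := fun (k : 'I_m) (z : 'rV[R]_n) => \sum_p A k p * (partial psi p z - eq 0 p).
have eAk : forall (k : 'I_m) (p : 'I_n), ((delta_mx 0 k : 'rV[R]_m) *m A) 0 p = A k p.
  move=> k p; rewrite mxE (bigD1 k) //= mxE !eqxx mul1r big1 ?addr0 // => j /negbTE jk.
  by rewrite mxE jk andbF mul0r.
have gfn : forall k, \forall y \near u, P k (th y) = partial f k y.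
  move=> k; apply: filterS Thn => y Ty.
  rewrite fF /partial comp_derive L1; last exact: dF.
  by apply: eq_bigr => p _; rewrite eAk pF.
have dP : forall k, differentiable (P k) (th u).
  move=> k; apply: diff_bigsum => p _.
  have -> : (fun z => A k p * (partial psi p z - eq 0 p)) =
     cst (A k p) * (partial psi p - cst (eq 0 p)) by apply/funext.
  apply: differentiableM; first exact: differentiable_cst.
  by apply: differentiableB; [exact: sm1 | exact: differentiable_cst].
have pP : forall k q, partial (P k) q (th u) =
    \sum_p A k p * partial (partial psi p) q (th u).
  move=> k q; rewrite /partial /P.
  have dterm : forall p, derivable (fun z => A k p * (partial psi p z - eq 0 p)) (th u) (delta_mx 0 q).
    move=> p; apply: diff_derivable.
    have -> : (fun z => A k p * (partial psi p z - eq 0 p)) =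
       cst (A k p) * (partial psi p - cst (eq 0 p)) by apply/funext.
    apply: differentiableM; first exact: differentiable_cst.
    by apply: differentiableB; [exact: sm1 | exact: differentiable_cst].
  have [_ ->] := der_bigsum (index_enum 'I_n) (fun p z => A k p * (partial psi p z - eq 0 p))
     (th u) (delta_mx 0 q) dterm.
  apply: eq_bigr => p _.
  have -> : (fun z => A k p * (partial psi p z - eq 0 p)) =
       cst (A k p) * (partial psi p - cst (eq 0 p)) by apply/funext.
  have d1 : derivable (partial psi p - cst (eq 0 p)) (th u) (delta_mx 0 q).
    by apply: diff_derivable; apply: differentiableB; [exact: sm1 | exact: differentiable_cst].
  rewrite deriveM; [|exact: derivable_cst|exact: d1].
  rewrite derive_cst scaler0 addr0 deriveB; [|exact/diff_derivable/sm1|exact: derivable_cst].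
  by rewrite derive_cst subr0; reflexivity.
have hfD : forall i k, derivable (fun y => partial f k y) u (delta_mx 0 i).
  move=> i k; apply: (near_eq_derivable (gfn k)).
  by rewrite comp_derivable; exact/diff_derivable/dP.
have hf : forall i k, 'D_(delta_mx 0 i) (fun y => partial f k y) u = G u i k.
  move=> i k.
  rewrite -(near_eq_derive _ (gfn k)) comp_derive L1 //.
  rewrite /G /induced_metric [RHS]mxE.
  rewrite [RHS](eq_bigr (fun j => \sum_p A i p * hess psi (th u) p j * A k j)); last first.
    by move=> j _; rewrite [(A *m _) i j]mxE [A^T j k]mxE mulr_suml.
  rewrite exchange_big /=; apply: eq_bigr => q _.
  rewrite eAk pP mulr_sumr; apply: eq_bigr => p _.
  by rewrite !mxE mulrA mulrAC.
have HT : (hess psi (theta_of A b u))^T = hess psi (theta_of A b u).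
  by apply/matrixP => p q; rewrite mxE Hsym.
have GT : (G u)^T = G u.
  by rewrite /G /induced_metric !trmx_mul trmxK HT mulmxA.
have Gsym : forall i k, G u i k = G u k i.
  by move=> i k; have := congr1 (fun M : 'M[R]_m => M k i) GT; rewrite /= [(G u)^T k i]mxE.
set Gi := invmx (G u).
set gfu := grad f u.
have Ha : nat_dir G f u = Gi *m gfu by [].
have HS : Hstar G zero_christoffel f u = 1%:M.
  apply/matrixP => i j; rewrite !mxE.
  have [dI DIeq] := dinv _ G u (delta_mx 0 i) dG Gu.
  set DI := \matrix_(j, k) 'D_(delta_mx 0 i) (fun y => invmx (G y) j k) u in DIeq.
  set DG := \matrix_(j, k) 'D_(delta_mx 0 i) (fun y => G y j k) u in DIeq.
  have -> : (fun y => nat_dir G f y j 0) =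
      (fun y => \sum_k invmx (G y) j k * partial f k y).
    apply/funext => y; rewrite /nat_dir mxE; apply: eq_bigr => k _.
    by rewrite /grad mxE.
  rewrite {1}/partial.
  have [_ ->] := der_bigsum (index_enum 'I_m) (fun k y => invmx (G y) j k * partial f k y)
     u (delta_mx 0 i) (fun k => derivableM (dI j k) (hfD i k)).
  rewrite (eq_bigr (fun k => Gi j k * G u k i + gfu k 0 * DI j k)); last first.
    move=> k _; rewrite (deriveM (dI j k) (hfD i k)) (hf i k) Gsym.
    by rewrite /DI /gfu /grad !mxE.
  have DC : forall kk, dual_christoffel G zero_christoffel u i kk j = (Gi *m DG) j kk.
    move=> kk; rewrite /dual_christoffel [RHS]mxE; apply: eq_bigr => l _.
    rewrite big1 ?subr0; last by move=> p _; rewrite /zero_christoffel mul0r.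
    by rewrite /DG mxE.
  rewrite [X in _ + X = _](eq_bigr (fun kk => nat_dir G f u kk 0 * (Gi *m DG) j kk)); last first.
    by move=> kk _; rewrite DC.
  rewrite big_split /=.
  have E1 : \sum_k Gi j k * G u k i = (i == j)%:R.
    have := congr1 (fun M : 'M[R]_m => M j i) (mulVmx Gu).
    by rewrite /= [(invmx (G u) *m G u) j i]mxE mxE eq_sym.
  have E2 : \sum_k gfu k 0 * DI j k = (DI *m gfu) j 0.
    by rewrite [RHS]mxE; apply: eq_bigr => k _; rewrite mulrC.
  have E3 : \sum_kk nat_dir G f u kk 0 * (Gi *m DG) j kk = ((Gi *m DG) *m nat_dir G f u) j 0.
    by rewrite [RHS]mxE; apply: eq_bigr => k _; rewrite mulrC.
  have E4 : DI *m gfu = - ((Gi *m DG) *m nat_dir G f u).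
    have e1 : gfu = G u *m nat_dir G f u by rewrite Ha mulKVmx.
    by rewrite {1}e1 mulmxA DIeq mulNmx.
  by rewrite E1 E2 E3 E4 mxE addrNK.
rewrite /dual_newton_system HS trmx1 mul1mx => Hb.
apply/matrixP => z i; rewrite (ord1 z) /dual_newton_update /nat_grad_step !mxE.
rewrite big1 ?mulr0 ?subr0; last first.
  by move=> j _; rewrite big1 // => kk _; rewrite /zero_christoffel !mul0r.
by rewrite Hb mul1r /nat_dir !mxE.
Qed.
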